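(* Let $n>2$ be an integer and $g=3n+1$, and let $G=\{\ell_1<\dots<\ell_g\}$ be a pure $(2n)$-sparse gapset of genus $g$. Then there is a unique $\alpha\in[1,g-1]$ such that $\ell_{\alpha+1}-\ell_\alpha=2n$.
   Context: A gapset is a finite set $G\subset\mathbb{N}=\{1,2,\dots\}$ such that whenever $z\in G$ and $z=x+y$ with $x,y\in\mathbb{N}$, then $x\in G$ or $y\in G$; its genus is $g=\#G$. $G$ is pure $\kappa$-sparse if $\ell_{i+1}-\ell_i\le\kappa$ for all $i$ with equality for some $i$. *)

(* Defs.v *)
From mathcomp Require Import all_boot.
Set Implicit Arguments. Unset Strict Implicit. Unset Printing Implicit Defensive.

(* A gapset G = {l_1 < ... < l_g} is represented by the strictly increasing
   list [l_1; ...; l_g] of its elements (so the set is finite and listed in order). *)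
Definition is_gapset (s : seq nat) : Prop :=
  sorted ltn s /\ (forall z, z \in s -> 0 < z) /\
  (forall x y, 0 < x -> 0 < y -> x + y \in s -> (x \in s) \/ (y \in s)).

Definition ell (s : seq nat) (i : nat) : nat := nth 0 s i.-1.

Definition pure_sparse (kappa : nat) (s : seq nat) : Prop :=
  (forall i, 1 <= i <= (size s).-1 -> ell s i.+1 - ell s i <= kappa) /\
  (exists i, 1 <= i <= (size s).-1 /\ ell s i.+1 - ell s i = kappa).

(* Main.v *)
Require Import Defs.
From mathcomp Require Import all_boot.
From mathcomp Require Import zify.

Lemma nth_step (s : seq nat) j : sorted ltn s -> j.+1 < size s ->
  nth 0 s j < nth 0 s j.+1.
Proof.
move=> ss hj; apply: (sorted_ltn_nth ltn_trans 0 ss); rewrite ?inE //.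
exact: ltnW.
Qed.

Lemma nth_mono (s : seq nat) i j : sorted ltn s -> i <= j -> j < size s ->
  nth 0 s i + (j - i) <= nth 0 s j.
Proof.
move=> ss; elim: j => [|j IH] hij hj.
  by move: hij; rewrite leqn0 => /eqP ->; rewrite addn0.
case: (ltnP i j.+1) => h.
  have := IH h (ltnW hj); have := @nth_step s j ss hj; lia.
have -> : i = j.+1 by lia.
by rewrite subnn addn0.
Qed.

Lemma last_bound (s : seq nat) : is_gapset s -> 0 < size s ->
  nth 0 s (size s).-1 <= 2 * size s - 1.
Proof.
move=> [ss [pos gap]] hs.
set z := nth 0 s (size s).-1.
have zs : z \in s by apply: mem_nth; rewrite prednK.
have us : uniq s := sorted_uniq ltn_trans ltnn ss.
have cnt_le : forall t : seq nat, uniq t -> (forall x, x \in t -> x != z) ->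
    count (mem s) t <= size s - 1.
  move=> t ut tz; rewrite -size_filter.
  have -> : size s - 1 = size [seq x <- s | x != z].
    rewrite size_filter.
    have h2 := count_predC (pred1 z) s.
    have h1 : count (pred1 z) s = 1 by rewrite (count_uniq_mem z us) zs.
    have -> : count (fun x => x != z) s = count (predC (pred1 z)) s by [].
    by rewrite -h2 h1 add1n subn1.
  apply: uniq_leq_size; first exact: filter_uniq.
  move=> x; rewrite !mem_filter => /andP[xs xt]; apply/andP; split => //.
  exact: tz.
set t := iota 1 (z - 1).
have ut : uniq t := iota_uniq _ _.
have hA : count (mem s) t <= size s - 1.
  apply: cnt_le => // x; rewrite mem_iota; lia.
have hB : count (mem s) (map (fun x => z - x) t) <= size s - 1.
  apply: cnt_le.
    rewrite map_inj_in_uniq // => x y; rewrite !mem_iota; lia.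
  move=> x /mapP[y]; rewrite mem_iota => hy ->; lia.
rewrite count_map in hB.
have hU : count (predU (mem s) (preim (fun x => z - x) (mem s))) t = size t.
  apply/eqP; rewrite -all_count; apply/allP => x; rewrite mem_iota => hx.
  rewrite /= /preim /=.
  have := gap x (z - x); rewrite subnKC; last by lia.
  move=> /(_ _ _ zs) []; try lia; by move=> ->; rewrite ?orbT.
have := count_predUI (mem s) (preim (fun x => z - x) (mem s)) t.
rewrite hU size_iota.
move: hA hB.
move: (count (mem s) t) (count (preim (fun x => z - x) (mem s)) t)
  (count (predI (mem s) (preim (fun x => z - x) (mem s))) t) => A B c.
lia.
Qed.

Theorem mainTheorem18 (n : nat) (s : seq nat) :
  2 < n -> is_gapset s -> size s = 3 * n + 1 -> pure_sparse (2 * n) s ->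
  exists! alpha : nat,
    1 <= alpha <= size s - 1 /\ ell s alpha.+1 - ell s alpha = 2 * n.
Proof.
move=> hn gs hs [_ [a [ha ea]]].
have hsub : (size s).-1 = size s - 1 by lia.
exists a; split; first by rewrite -hsub.
move=> b [hb eb].
have hz := @last_bound s gs (ltac:(lia) : 0 < size s).
have [ss [pos _]] := gs.
have p0 : 0 < nth 0 s 0 by apply: pos; apply: mem_nth; rewrite hs addn1.
move: ea eb; rewrite /ell /= => ea eb.
case: (ltngtP b a) => // hlt; exfalso.
-
  have m1 := @nth_mono s (0) (b.-1) ss (ltac:(lia)) (ltac:(lia)).
  have m2 := @nth_mono s (b) (a.-1) ss (ltac:(lia)) (ltac:(lia)).
  have m3 := @nth_mono s (a) ((size s).-1) ss (ltac:(lia)) (ltac:(lia)).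
  have e1 : b.-1.+1 = b by lia.
  have e2 : a.-1.+1 = a by lia.
  lia.
- have m1 := @nth_mono s (0) (a.-1) ss (ltac:(lia)) (ltac:(lia)).
  have m2 := @nth_mono s (a) (b.-1) ss (ltac:(lia)) (ltac:(lia)).
  have m3 := @nth_mono s (b) ((size s).-1) ss (ltac:(lia)) (ltac:(lia)).
  have e1 : b.-1.+1 = b by lia.
  have e2 : a.-1.+1 = a by lia.
  lia.
Qed.
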